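(* Let $g$ be the pp-wave metric $ds^2=H(u,x^1,x^2)\,du^2+2\,du\,dv+(dx^1)^2+(dx^2)^2$, $0<b<1$, $m>0$, and consider the Finslerian pp-wave geodesic Lagrangian $$L=-\frac{1}{2n}\,\dot u^{2b}\left(-H\dot u^2-2\dot u\dot v-\delta_{ij}\dot x^i\dot x^j\right)^{1-b}-\frac{m^2}{2}n .$$ Along any solution of its Euler–Lagrange equations with $\dot u>0$ and $\mathcal G:=-H\dot u^2-2\dot u\dot v-\delta_{ij}\dot x^i\dot x^j>0$, the momentum $p_v=\partial L/\partial\dot v=(1-b)\dot u^{1+2b}\mathcal G^{-b}/n$ is constant, equal to some $\pi_v>0$, and $\mathcal G/\dot u^2$ equals the constant $$M_b^2=\left[\frac{(1-b)^2m^2}{\pi_v^2}\right]^{\frac{1}{1+b}} .$$ Moreover, if $\Upsilon$ is any vector field satisfying $\mathcal L_\Upsilon\left(g_{\mu\nu}-\frac{b}{1-b}M_b^2K_{\mu\nu}\right)=2\Omega(\mathrm x)\left(g_{\mu\nu}+M_b^2K_{\mu\nu}\right)$ with $K=du\otimes du$ and this value of $M_b^2$, then $I=\Upsilon^\mu\,\partial L/\partial\dot{\mathrm x}^\mu$ is constant along such a solution.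
   Context: Coordinates $(u,v,x^1,x^2)$, $i,j=1,2$, dots denote $d/d\lambda$, and $n(\lambda)>0$ is the einbein, varied independently (its Euler–Lagrange equation gives $n=\frac{1}{m}\dot u^{b}\mathcal G^{(1-b)/2}$). Here $\mathcal K=K_{\mu\nu}\dot{\mathrm x}^\mu\dot{\mathrm x}^\nu=\dot u^2$, so $M_b^{-2}=\mathcal K/\mathcal G$. *)

(* Defs.v *)
(* R : realType, points of spacetime are row vectors 'rV[R]_4
   with coordinates ordered (u, v, x^1, x^2) = indices 0,1,2,3. *)
From HB Require Import structures.
From mathcomp Require Import all_boot all_order all_algebra.
From mathcomp Require Import all_classical all_reals all_analysis.
Set Implicit Arguments. Unset Strict Implicit. Unset Printing Implicit Defensive.
Import Order.TTheory GRing.Theory Num.Theory.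
Import numFieldNormedType.Exports.
Local Open Scope classical_set_scope.
Local Open Scope ring_scope.

Definition iu : 'I_4 := @Ordinal 4 0 isT.
Definition iv : 'I_4 := @Ordinal 4 1 isT.
Definition i1 : 'I_4 := @Ordinal 4 2 isT.
Definition i2 : 'I_4 := @Ordinal 4 3 isT.

Definition ebasis {R : realType} (mu : 'I_4) : 'rV[R]_4 := delta_mx 0 mu.

Definition pd {R : realType} (f : 'rV[R]_4 -> R) (mu : 'I_4) (p : 'rV[R]_4) : R :=
  'D_(ebasis mu) f p.

Definition ppmetric {R : realType} (H : R -> R -> R -> R) (p : 'rV[R]_4) : 'M[R]_4 :=
  \matrix_(i, j)
    (if (i == iu) && (j == iu) then H (p ord0 iu) (p ord0 i1) (p ord0 i2)
     else if ((i == iu) && (j == iv)) || ((i == iv) && (j == iu)) then 1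
     else if ((i == i1) && (j == i1)) || ((i == i2) && (j == i2)) then 1
     else 0).

Definition Kmat {R : realType} : 'M[R]_4 :=
  \matrix_(i, j) (if (i == iu) && (j == iu) then 1 else 0).

Definition calG {R : realType} (H : R -> R -> R -> R) (p qd : 'rV[R]_4) : R :=
  - \sum_(i < 4) \sum_(j < 4) ppmetric H p i j * qd ord0 i * qd ord0 j.

Definition Lagr {R : realType} (b m : R) (H : R -> R -> R -> R) (p qd : 'rV[R]_4) (nn : R) : R :=
  - (1 / (2 * nn)) * (qd ord0 iu `^ (2 * b)) * (calG H p qd `^ (1 - b))
  - (m ^+ 2 / 2) * nn.

Definition pmom {R : realType} (b m : R) (H : R -> R -> R -> R) (mu : 'I_4)
  (p qd : 'rV[R]_4) (nn : R) : R :=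
  'D_(ebasis mu) (fun w => Lagr b m H p w nn) qd.

Definition force {R : realType} (b m : R) (H : R -> R -> R -> R) (mu : 'I_4)
  (p qd : 'rV[R]_4) (nn : R) : R :=
  'D_(ebasis mu) (fun y => Lagr b m H y qd nn) p.

Definition dLdn {R : realType} (b m : R) (H : R -> R -> R -> R) (p qd : 'rV[R]_4) (nn : R) : R :=
  derive1 (fun t : R => Lagr b m H p qd t) nn.

Definition EL_solution {R : realType} (b m : R) (H : R -> R -> R -> R) (I : set R)
  (x : R -> 'rV[R]_4) (n : R -> R) : Prop :=
  (forall l, I l -> derivable x l 1) /\
  (forall l, I l -> forall mu : 'I_4,
     is_derive l (1 : R) (fun s => pmom b m H mu (x s) (derive1 x s) (n s))
               (force b m H mu (x l) (derive1 x l) (n l))) /\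
  (forall l, I l -> dLdn b m H (x l) (derive1 x l) (n l) = 0).

Definition lieD {R : realType} (Y : 'rV[R]_4 -> 'rV[R]_4) (T : 'rV[R]_4 -> 'M[R]_4)
  (p : 'rV[R]_4) (i j : 'I_4) : R :=
  \sum_(k < 4) ( Y p ord0 k * pd (fun q => T q i j) k p
               + T p k j * pd (fun q => Y q ord0 k) i p
               + T p i k * pd (fun q => Y q ord0 k) j p).

Definition Mb2 {R : realType} (b m piv : R) : R :=
  ((1 - b) ^+ 2 * m ^+ 2 / piv ^+ 2) `^ (1 / (1 + b)).

(* Main.v *)
Require Import Defs.
From HB Require Import structures.
From mathcomp Require Import all_boot all_order all_algebra.
From mathcomp Require Import all_classical all_reals all_analysis.
From mathcomp Require Import ring lra.
Import Order.TTheory GRing.Theory Num.Theory.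
Import numFieldNormedType.Exports.
Local Open Scope classical_set_scope.
Local Open Scope ring_scope.

Definition Hc {R : realType} (H : R -> R -> R -> R) (p : 'rV[R]_4) := H (p ord0 iu) (p ord0 i1) (p ord0 i2).
Section Aux.
Variable R : realType.
Lemma cst_on_itv (f : R -> R) (I : set R) :
  is_interval I -> (forall l, I l -> is_derive l (1:R) f 0) ->
  forall s t, I s -> I t -> f s = f t.
Proof.
move=> iI df.
suff H : forall s t, I s -> I t -> s <= t -> f s = f t.
  move=> s t Is It; case: (leP s t) => st; first exact: H.
  by apply/esym/H => //; apply: ltW.
move=> s t Is It st.
have sub : forall z, z \in `[s, t] -> I z.
  by move=> z; rewrite in_itv /= => zst; apply: (iI s t).
have cf : {within `[s, t], continuous f}.
  apply: derivable_within_continuous => z zin.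
  by case: (df z (sub z zin)).
have [c _ E] := MVT_segment (df := fun _ => 0) st
  (fun z zin => df z (sub z (subset_itv_oo_cc zin))) cf.
by apply/eqP; rewrite eq_sym -subr_eq0 E mul0r.
Qed.

Lemma is_derive_ext (V W : normedModType R) (f g : V -> W) x v d :
  (forall t, f t = g t) -> is_derive x v f d -> is_derive x v g d.
Proof. by move=> fg; have -> : f = g by apply/funext. Qed.

Lemma dir_deriveP (f : 'rV[R]_4 -> R) (p v : 'rV[R]_4) (d : R) :
  is_derive (0:R) (1:R) (fun t : R => f (t *: v + p)) d -> is_derive p v f d.
Proof.
move=> [dg <-]; split; first exact/derivable1P.
rewrite /derive; do 2 f_equal; apply/funext => h /=.
by rewrite addr0 scale0r add0r [_%:A]mulr1.
Qed.

Lemma dir_deriveP' (f : 'rV[R]_4 -> R) (p v : 'rV[R]_4) (d : R) :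
  is_derive p v f d -> is_derive (0:R) (1:R) (fun t : R => f (t *: v + p)) d.
Proof.
move=> [dg <-]; split; first by move/derivable1P: dg.
rewrite /derive; do 2 f_equal; apply/funext => h /=.
by rewrite addr0 scale0r add0r [_%:A]mulr1.
Qed.

Lemma big4 (F : 'I_4 -> R) : \sum_(i < 4) F i = F iu + F iv + F i1 + F i2.
Proof.
rewrite !big_ord_recr big_ord0 /= add0r.
by repeat f_equal; apply: val_inj.
Qed.

Lemma calGE (H : R -> R -> R -> R) (p q : 'rV[R]_4) : calG H p q = - (Hc H p * q ord0 iu ^+ 2 + 2 * q ord0 iu * q ord0 iv
   + q ord0 i1 ^+ 2 + q ord0 i2 ^+ 2).
Proof.
rewrite /calG !big4 !mxE /=. rewrite /Hc. ring.
Qed.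
End Aux.
Section D1.
Variable R : realType.
Implicit Types (f g : R -> R) (x : R).

Lemma dcst (c x : R) : is_derive x (1:R) (fun _ : R => c) 0.
Proof. exact: is_derive_cst. Qed.
Lemma did x : is_derive x (1:R) (fun t : R => t) 1.
Proof. exact: is_derive_id. Qed.
Lemma dadd f g x df dg : is_derive x 1 f df -> is_derive x 1 g dg ->
  is_derive x 1 (fun t => f t + g t) (df + dg).
Proof. by move=> F G; have := is_deriveD F G. Qed.
Lemma dsub f g x df dg : is_derive x 1 f df -> is_derive x 1 g dg ->
  is_derive x 1 (fun t => f t - g t) (df - dg).
Proof. by move=> F G; have := is_deriveB F G. Qed.
Lemma dopp f x df : is_derive x 1 f df ->
  is_derive x 1 (fun t => - f t) (- df).
Proof. by move=> F; have := is_deriveN F. Qed.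
Lemma dmul f g x df dg : is_derive x 1 f df -> is_derive x 1 g dg ->
  is_derive x 1 (fun t => f t * g t) (f x * dg + g x * df).
Proof. by move=> F G; have := is_deriveM F G. Qed.
Lemma dpow f x df r : 0 < f x -> is_derive x 1 f df ->
  is_derive x 1 (fun t => f t `^ r) (r * f x `^ (r - 1) * df).
Proof.
move=> fx F; have P := is_derive1_powR r fx.
by have := is_derive1_comp P F.
Qed.


Definition isd (f : R -> R) (x d : R) := is_derive x (1:R) f d.
Lemma isdE f x d : isd f x d -> is_derive x (1:R) f d. Proof. by []. Qed.
Lemma ieq f x d d' : isd f x d -> d = d' -> isd f x d'. Proof. by move=> ? <-. Qed.
Lemma icst (c x : R) : isd (fun _ : R => c) x 0. Proof. exact: dcst. Qed.
Lemma iid x : isd (fun t : R => t) x 1. Proof. exact: did. Qed.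
Lemma iaff (a c x : R) : isd (fun t : R => t * a + c) x a.
Proof.
rewrite /isd; have := dadd _ _ _ _ _ (dmul _ _ _ _ _ (did x) (dcst a x)) (dcst c x).
by rewrite mulr0 mulr1 add0r addr0.
Qed.
Lemma iadd f g x df dg : isd f x df -> isd g x dg -> isd (fun t => f t + g t) x (df + dg).
Proof. exact: dadd. Qed.
Lemma isub f g x df dg : isd f x df -> isd g x dg -> isd (fun t => f t - g t) x (df - dg).
Proof. exact: dsub. Qed.
Lemma iopp f x df : isd f x df -> isd (fun t => - f t) x (- df).
Proof. exact: dopp. Qed.
Lemma imul f g x df dg : isd f x df -> isd g x dg ->
  isd (fun t => f t * g t) x (f x * dg + g x * df).
Proof. exact: dmul. Qed.
Lemma ipow f x df r : 0 < f x -> isd f x df ->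
  isd (fun t => f t `^ r) x (r * f x `^ (r - 1) * df).
Proof. exact: dpow. Qed.
Lemma isq f x df : isd f x df -> isd (fun t => f t ^+ 2) x (2 * f x * df).
Proof.
move=> F; rewrite /isd; have := is_deriveX 2 F.
by rewrite expr1 /GRing.scale /= mulr_natl.
Qed.
Lemma iinv f x df : f x != 0 -> isd f x df -> isd (fun t => (f t)^-1) x (- (f x) ^- 2 * df).
Proof. by move=> f0 F; have := is_deriveV f0 F. Qed.
End D1.
Section Lag.
Variable R : realType.

Lemma dLq (b m : R) H (p q v : 'rV[R]_4) nn :
  0 < q ord0 iu -> 0 < calG H p q ->
  is_derive q v (fun w => Lagr b m H p w nn)
   (- (1 / (2 * nn)) * ((q ord0 iu `^ (2 * b)) * ((1 - b) * calG H p q `^ (1 - b - 1) *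
      (- (2 * Hc H p * q ord0 iu * v ord0 iu + 2 * (v ord0 iu * q ord0 iv + q ord0 iu * v ord0 iv)
          + 2 * q ord0 i1 * v ord0 i1 + 2 * q ord0 i2 * v ord0 i2)))
     + calG H p q `^ (1 - b) * (2 * b * q ord0 iu `^ (2 * b - 1) * v ord0 iu))).
Proof.
move=> qu G0; apply: dir_deriveP.
apply: (@is_derive_ext _ _ _ (fun t : R =>
  - (1 / (2 * nn)) * (t * v ord0 iu + q ord0 iu) `^ (2 * b) *
   (- (Hc H p * (t * v ord0 iu + q ord0 iu) ^+ 2 + 2 * (t * v ord0 iu + q ord0 iu) * (t * v ord0 iv + q ord0 iv)
   + (t * v ord0 i1 + q ord0 i1) ^+ 2 + (t * v ord0 i2 + q ord0 i2) ^+ 2)) `^ (1 - b)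
   - (m ^+ 2 / 2) * nn)).
  by move=> t; rewrite /Lagr calGE !mxE.
apply: isdE; eapply ieq.
  apply: isub; last exact: icst.
  apply: imul.
  - apply: imul; first exact: icst.
    apply: ipow; last exact: iaff.
    by rewrite mul0r add0r.
  - apply: ipow; first by rewrite !mul0r !add0r -calGE.
    apply: iopp; apply: iadd; first apply: iadd; first apply: iadd.
    + apply: imul; first exact: icst.
      apply: isq; exact: iaff.
    + apply: imul; last exact: iaff.
      apply: imul; first exact: icst.
      exact: iaff.
    + apply: isq; exact: iaff.
    + apply: isq; exact: iaff.
rewrite /= !mul0r !add0r -calGE. ring.
Qed.

Lemma dLx (b m : R) H (p q v : 'rV[R]_4) nn :
  differentiable (Hc H) p -> 0 < calG H p q ->
  is_derive p v (fun y => Lagr b m H y q nn)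
   (- (1 / (2 * nn)) * (q ord0 iu `^ (2 * b) * ((1 - b) * calG H p q `^ (1 - b - 1) *
      (- ('D_v (Hc H) p * q ord0 iu ^+ 2))))).
Proof.
move=> dH G0; apply: dir_deriveP.
apply: (@is_derive_ext _ _ _ (fun t : R =>
  - (1 / (2 * nn)) * q ord0 iu `^ (2 * b) *
   (- (Hc H (t *: v + p) * q ord0 iu ^+ 2 + 2 * q ord0 iu * q ord0 iv
   + q ord0 i1 ^+ 2 + q ord0 i2 ^+ 2)) `^ (1 - b)
   - (m ^+ 2 / 2) * nn)).
  by move=> t; rewrite /Lagr calGE.
have dh : @isd R (fun t : R => Hc H (t *: v + p)) 0 ('D_v (Hc H) p).
  exact: (@dir_deriveP' R _ _ _ _ (derivableP (@diff_derivable _ _ _ _ _ v dH))).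
apply: isdE; eapply ieq.
  apply: isub; last exact: icst.
  apply: imul; first exact: icst.
  apply: ipow; first by rewrite scale0r add0r -calGE.
  apply: iopp; apply: iadd; last exact: icst.
  apply: iadd; last exact: icst.
  apply: iadd; last exact: icst.
  apply: imul; [exact: dh | exact: icst].
rewrite /= scale0r add0r -calGE. ring.
Qed.

Lemma dLn (b m : R) H (p q : 'rV[R]_4) nn : nn != 0 ->
  dLdn b m H p q nn = q ord0 iu `^ (2 * b) * calG H p q `^ (1 - b) / (2 * nn ^+ 2) - m ^+ 2 / 2.
Proof.
move=> n0; rewrite /dLdn derive1E.
suff D : is_derive nn (1:R) (fun t : R => Lagr b m H p q t)
   (q ord0 iu `^ (2 * b) * calG H p q `^ (1 - b) / (2 * nn ^+ 2) - m ^+ 2 / 2).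
  by rewrite derive_val.
apply: (@is_derive_ext _ _ _ (fun t : R =>
  - ((2 * t)^-1) * q ord0 iu `^ (2 * b) * calG H p q `^ (1 - b) - m ^+ 2 / 2 * t)).
  by move=> t; rewrite /Lagr mul1r.
apply: isdE; eapply ieq.
  apply: isub; last first.
    apply: imul; [exact: icst | exact: iid].
  apply: imul; last exact: icst.
  apply: imul; last exact: icst.
  apply: iopp; apply: iinv; first by rewrite mulf_neq0 // pnatr_eq0.
  apply: imul; [exact: icst | exact: iid].
rewrite /=. field. by rewrite n0.
Qed.

Lemma Dlin (f : 'rV[R]_4 -> R) p v : differentiable f p ->
  'D_v f p = \sum_(k < 4) v ord0 k * pd f k p.
Proof.
move=> df; rewrite deriveE //.
rewrite {1}(row_sum_delta v) linear_sum; apply: eq_bigr => k _.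
by rewrite linearZ /pd deriveE.
Qed.

Lemma dYx (Y : 'rV[R]_4 -> 'rV[R]_4) (x : R -> 'rV[R]_4) k l :
  differentiable Y (x l) -> derivable x l 1 ->
  is_derive l (1:R) (fun s => Y (x s) ord0 k)
    (\sum_(r < 4) derive1 x l ord0 r * pd (fun z => Y z ord0 k) r (x l)).
Proof.
move=> dY dx.
have dYk : differentiable (fun z => Y z ord0 k) (x l).
  exact: (@differentiable_comp _ _ _ _ Y (fun N : 'rV[R]_4 => N ord0 k) _ dY
    (differentiable_coord _ _ _)).
have dx' : differentiable x l by apply/derivable1_diffP.
have dg : differentiable ((fun z => Y z ord0 k) \o x) l.
  exact: differentiable_comp.
have := derivableP (@diff_derivable _ _ _ _ _ (1:R) dg).
rewrite (deriveE _ dg) diff_comp // /= -deriveE // -(deriveE _ dx') -derive1E Dlin //.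
Qed.
End Lag.
Section Pow.
Variable R : realType.
Lemma pexp (a x : R) : 0 < a -> a `^ x = expR (x * ln a).
Proof. by move=> a0; rewrite /powR gt_eqF. Qed.

Lemma lnMp (x y : R) : 0 < x -> 0 < y -> ln (x * y) = ln x + ln y.
Proof. by move=> x0 y0; rewrite lnM // posrE. Qed.
Lemma lnVp (x : R) : 0 < x -> ln (x ^-1) = - ln x.
Proof. by move=> x0; rewrite lnV // posrE. Qed.

Lemma Mb2_eq (b m qu G nn piv : R) : 0 < b -> b < 1 -> 0 < m -> 0 < qu -> 0 < G -> 0 < nn ->
  m ^+ 2 * nn ^+ 2 = qu `^ (2 * b) * G `^ (1 - b) ->
  piv = (1 - b) * qu `^ (1 + 2 * b) * G `^ (- b) / nn ->
  Mb2 b m piv = G / qu ^+ 2.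
Proof.
move=> b0 b1 m0 q0 G0 n0 En ->.
have P1 : 0 < qu `^ (1 + 2 * b) by apply: powR_gt0.
have P2 : 0 < G `^ (- b) by apply: powR_gt0.
have P3 : 0 < qu `^ (2 * b) by apply: powR_gt0.
have P4 : 0 < G `^ (1 - b) by apply: powR_gt0.
have b1' : 0 < 1 - b by rewrite subr_gt0.
rewrite /Mb2.
have -> : (1 - b) ^+ 2 * m ^+ 2 / ((1 - b) * qu `^ (1 + 2 * b) * G `^ (- b) / nn) ^+ 2
   = (m ^+ 2 * nn ^+ 2) / (qu `^ (1 + 2 * b) * G `^ (- b)) ^+ 2.
  field. by rewrite !gt_eqF.
rewrite En.
set X := (qu `^ (2 * b) * G `^ (1 - b) / _).
have X0 : 0 < X by rewrite /X divr_gt0 ?mulr_gt0 ?exprn_gt0 ?mulr_gt0.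
rewrite pexp //.
have -> : ln X = (1 + b) * (ln G - 2 * ln qu).
  rewrite /X lnMp ?mulr_gt0 ?invr_gt0 ?exprn_gt0 ?mulr_gt0 // lnVp ?exprn_gt0 ?mulr_gt0 //.
  rewrite lnMp // lnXn ?mulr_gt0 // lnMp // !ln_powR. ring.
rewrite mulrA mul1r mulVf ?mul1r; last by rewrite gt_eqF // addr_gt0.
by rewrite expRB expRM_natl !lnK ?posrE.
Qed.
End Pow.
Section Ent.
Variable R : realType.
Lemma ebE mu k : (ebasis mu : 'rV[R]_4) ord0 k = (mu == k)%:R.
Proof. by rewrite /ebasis mxE /= eq_sym. Qed.

Lemma pdT (H : R -> R -> R -> R) (c : R) i j k p : differentiable (Hc H) p ->
  pd (fun q => (ppmetric H q - c *: Kmat) i j) k p =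
  if (i == iu) && (j == iu) then pd (Hc H) k p else 0.
Proof.
move=> dH; rewrite /pd.
case E: ((i == iu) && (j == iu)).
  have -> : (fun q => (ppmetric H q - c *: Kmat) i j) = (fun q => Hc H q - c).
    by apply/funext => q; rewrite !mxE E mulr1.
  have := is_deriveB (derivableP (@diff_derivable _ _ _ _ _ (ebasis k) dH))
    (is_derive_cst c p (ebasis k)).
  by move=> [_ ->]; rewrite subr0.
have -> : (fun q => (ppmetric H q - c *: Kmat) i j) =
  cst ((if ((i == iu) && (j == iv)) || ((i == iv) && (j == iu)) then 1
     else if ((i == i1) && (j == i1)) || ((i == i2) && (j == i2)) then 1 else 0) - c * 0).
  by apply/funext => q; rewrite !mxE E.
by rewrite derive_cst.
Qed.

End Ent.

Lemma lin_eq0 (R : comRingType) (A B X Y : R) : X = Y -> A - B = X - Y -> A = B.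
Proof. by move=> -> /eqP; rewrite subrr subr_eq0 => /eqP. Qed.

Lemma lie_alg (R : comRingType) (c M s s0 s1 s2 s3 s4 s5 s6 s7 s8 s9 s10 s11 s12 s13 s14 s15 s16 s17 s18 s19 s20 s21 s22 s23 s24 s25 s26 s27 s28 : R) :
  s19 * s19 * (s23 * s + (s27 - c * 1) * s0 + (s27 - c * 1) * s0 + (s24 * s1 + (1 - c * 0) * s2 + (1 - c * 0) * s2) + (s25 * s3 + (0 - c * 0) * s4 + (0 - c * 0) * s4) + (s26 * s5 + (0 - c * 0) * s6 + (0 - c * 0) * s6)) + s19 * s20 * (s23 * 0 + (1 - c * 0) * s0 + (s27 - c * 1) * s7 + (s24 * 0 + (0 - c * 0) * s2 + (1 - c * 0) * s8) + (s25 * 0 + (0 - c * 0) * s4 + (0 - c * 0) * s9) + (s26 * 0 + (0 - c * 0) * s6 + (0 - c * 0) * s10)) + s19 * s21 * (s23 * 0 + (0 - c * 0) * s0 + (s27 - c * 1) * s11 + (s24 * 0 + (0 - c * 0) * s2 + (1 - c * 0) * s12) + (s25 * 0 + (1 - c * 0) * s4 + (0 - c * 0) * s13) + (s26 * 0 + (0 - c * 0) * s6 + (0 - c * 0) * s14)) + s19 * s22 * (s23 * 0 + (0 - c * 0) * s0 + (s27 - c * 1) * s15 + (s24 * 0 + (0 - c * 0) * s2 + (1 - c * 0) * s16) + (s25 * 0 + (0 - c * 0) * s4 + (0 - c * 0) * s17) + (s26 * 0 + (1 - c * 0) * s6 + (0 - c * 0) * s18)) + (s20 * s19 * (s23 *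 0 + (s27 - c * 1) * s7 + (1 - c * 0) * s0 + (s24 * 0 + (1 - c * 0) * s8 + (0 - c * 0) * s2) + (s25 * 0 + (0 - c * 0) * s9 + (0 - c * 0) * s4) + (s26 * 0 + (0 - c * 0) * s10 + (0 - c * 0) * s6)) + s20 * s20 * (s23 * 0 + (1 - c * 0) * s7 + (1 - c * 0) * s7 + (s24 * 0 + (0 - c * 0) * s8 + (0 - c * 0) * s8) + (s25 * 0 + (0 - c * 0) * s9 + (0 - c * 0) * s9) + (s26 * 0 + (0 - c * 0) * s10 + (0 - c * 0) * s10)) + s20 * s21 * (s23 * 0 + (0 - c * 0) * s7 + (1 - c * 0) * s11 + (s24 * 0 + (0 - c * 0) * s8 + (0 - c * 0) * s12) + (s25 * 0 + (1 - c * 0) * s9 + (0 - c * 0) * s13) + (s26 * 0 + (0 - c * 0) * s10 + (0 - c * 0) * s14)) + s20 * s22 * (s23 * 0 + (0 - c * 0) * s7 + (1 - c * 0) * s15 + (s24 * 0 + (0 - c * 0) * s8 + (0 - c * 0) * s16) + (s25 * 0 + (0 - c * 0) * s9 + (0 - c * 0) * s17) + (s26 * 0 + (1 - c * 0) * s10 + (0 - c * 0) * s18))) + (s21 * s19 * (s23 * 0 + (s27 - c * 1) * s11 + (0 - c * 0) * s0 + (s24 * 0 + (1 - c * 0) * s12 + (0 - c * 0) * s2) + (s25 * 0 + (0 - c * 0) * s13 + (1 - c * 0) * s4) + (s26 * 0 + (0 - c * 0) * s14 + (0 - c * 0) * s6)) + s21 * s20 * (s23 * 0 + (1 - c * 0)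 * s11 + (0 - c * 0) * s7 + (s24 * 0 + (0 - c * 0) * s12 + (0 - c * 0) * s8) + (s25 * 0 + (0 - c * 0) * s13 + (1 - c * 0) * s9) + (s26 * 0 + (0 - c * 0) * s14 + (0 - c * 0) * s10)) + s21 * s21 * (s23 * 0 + (0 - c * 0) * s11 + (0 - c * 0) * s11 + (s24 * 0 + (0 - c * 0) * s12 + (0 - c * 0) * s12) + (s25 * 0 + (1 - c * 0) * s13 + (1 - c * 0) * s13) + (s26 * 0 + (0 - c * 0) * s14 + (0 - c * 0) * s14)) + s21 * s22 * (s23 * 0 + (0 - c * 0) * s11 + (0 - c * 0) * s15 + (s24 * 0 + (0 - c * 0) * s12 + (0 - c * 0) * s16) + (s25 * 0 + (0 - c * 0) * s13 + (1 - c * 0) * s17) + (s26 * 0 + (1 - c * 0) * s14 + (0 - c * 0) * s18))) + (s22 * s19 * (s23 * 0 + (s27 - c * 1) * s15 + (0 - c * 0) * s0 + (s24 * 0 + (1 - c * 0) * s16 + (0 - c * 0) * s2) + (s25 * 0 + (0 - c * 0) * s17 + (0 - c * 0) * s4) + (s26 * 0 + (0 - c * 0) * s18 + (1 - c * 0) * s6)) + s22 * s20 * (s23 * 0 + (1 - c * 0) * s15 + (0 - c * 0) * s7 + (s24 * 0 + (0 - c * 0) * s16 + (0 - c * 0) * s8) + (s25 * 0 + (0 - c * 0) * s17 + (0 - c * 0) * s9) + (s26 * 0 + (0 - c * 0) * s18 + (1 - c * 0) * s10)) + s22 * s21 * (s23 * 0 + (0 - c * 0) * s15 + (0 - c * 0)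 * s11 + (s24 * 0 + (0 - c * 0) * s16 + (0 - c * 0) * s12) + (s25 * 0 + (1 - c * 0) * s17 + (0 - c * 0) * s13) + (s26 * 0 + (0 - c * 0) * s18 + (1 - c * 0) * s14)) + s22 * s22 * (s23 * 0 + (0 - c * 0) * s15 + (0 - c * 0) * s15 + (s24 * 0 + (0 - c * 0) * s16 + (0 - c * 0) * s16) + (s25 * 0 + (0 - c * 0) * s17 + (0 - c * 0) * s17) + (s26 * 0 + (1 - c * 0) * s18 + (1 - c * 0) * s18))) = s19 * s19 * (2 * s28 * (s27 + M * 1)) + s19 * s20 * (2 * s28 * (1 + M * 0)) + s19 * s21 * (2 * s28 * (0 + M * 0)) + s19 * s22 * (2 * s28 * (0 + M * 0)) + (s20 * s19 * (2 * s28 * (1 + M * 0)) + s20 * s20 * (2 * s28 * (0 + M * 0)) + s20 * s21 * (2 * s28 * (0 + M * 0)) + s20 * s22 * (2 * s28 * (0 + M * 0))) + (s21 * s19 * (2 * s28 * (0 + M * 0)) + s21 * s20 * (2 * s28 * (0 + M * 0)) + s21 * s21 * (2 * s28 * (1 + M * 0)) + s21 * s22 * (2 * s28 * (0 + M * 0))) + (s22 * s19 * (2 * s28 * (0 + M * 0)) + s22 * s20 * (2 * s28 * (0 + M * 0)) + s22 * s21 * (2 * s28 * (0 + M * 0)) + s22 * s22 * (2 * s28 * (1 + M * 0))) ->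
  s23 * s * s19 ^+ 2 + s24 * s1 * s19 ^+ 2 + s25 * s3 * s19 ^+ 2 + s26 * s5 * s19 ^+ 2 + 2 * ((s19 * s0 + s20 * s7 + s21 * s11 + s22 * s15) * ((s27 - c) * s19 + s20) + (s19 * s2 + s20 * s8 + s21 * s12 + s22 * s16) * s19 + (s19 * s4 + s20 * s9 + s21 * s13 + s22 * s17) * s21 + (s19 * s6 + s20 * s10 + s21 * s14 + s22 * s18) * s22) = 2 * s28 * (- - (s27 * s19 ^+ 2 + 2 * s19 * s20 + s21 ^+ 2 + s22 ^+ 2) + M * s19 ^+ 2).
Proof. move=> E; apply: lin_eq0 E _. ring. Qed.

Lemma fin_alg (R : numFieldType) (K h c qu qv q1 q2 Yu Yv Y1 Y2 Hu Hv H1 H2 Du Dv D1 D2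
   Fu Fv F1 F2 Pu Pv P1 P2 Z : R) :
  Yu * Hu * qu ^+ 2 + Yv * Hv * qu ^+ 2 + Y1 * H1 * qu ^+ 2 + Y2 * H2 * qu ^+ 2
  + 2 * (Du * ((h - c) * qu + qv) + Dv * qu + D1 * q1 + D2 * q2) = Z -> Z = 0 ->
  Fu = K / 2 * (Hu * qu ^+ 2) -> Fv = K / 2 * (Hv * qu ^+ 2) ->
  F1 = K / 2 * (H1 * qu ^+ 2) -> F2 = K / 2 * (H2 * qu ^+ 2) ->
  Pu = K * ((h - c) * qu + qv) -> Pv = K * qu -> P1 = K * q1 -> P2 = K * q2 ->
  Yu * Fu + Pu * Du + (Yv * Fv + Pv * Dv) + (Y1 * F1 + P1 * D1) + (Y2 * F2 + P2 * D2) = 0.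
Proof.
move=> L Z0 -> -> -> -> -> -> -> ->.
rewrite -(mulr0 (K / 2)) -Z0 -L. field; done.
Qed.

Section Pt.
Variable R : realType.

Lemma powE1 (G b : R) : 0 < G -> G `^ (1 - b) = G * G `^ (- b).
Proof. by move=> G0; rewrite powRD ?powRr1 ?ltW //; apply/implyP => _; rewrite gt_eqF. Qed.
Lemma powE2 (q b : R) : 0 < q -> q `^ (2 * b - 1) = q `^ (2 * b) / q.
Proof. by move=> q0; rewrite powRB ?powRr1 ?ltW //; apply/implyP => _; rewrite gt_eqF. Qed.
Lemma powE3 (q b : R) : 0 < q -> q `^ (1 + 2 * b) = q * q `^ (2 * b).
Proof. by move=> q0; rewrite powRD ?powRr1 ?ltW //; apply/implyP => _; rewrite gt_eqF. Qed.

Lemma pmomC (b m : R) H (P q : 'rV[R]_4) nn mu :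
  0 < q ord0 iu -> 0 < calG H P q -> 0 < nn -> b < 1 ->
  pmom b m H mu P q nn = (1 - b) * q ord0 iu `^ (2 * b) * calG H P q `^ (- b) / nn *
   ((mu == iu)%:R * ((Hc H P - b / (1 - b) * (calG H P q / q ord0 iu ^+ 2)) * q ord0 iu + q ord0 iv)
    + (mu == iv)%:R * q ord0 iu + (mu == i1)%:R * q ord0 i1 + (mu == i2)%:R * q ord0 i2).
Proof.
move=> q0 G0 n0 b1; rewrite /pmom.
have [_ ->] := @dLq R b m H P q (ebasis mu) nn q0 G0.
rewrite !ebE powE1 // powE2 // (_ : 1 - b - 1 = - b); last by ring.
field.
by rewrite !gt_eqF // subr_gt0.
Qed.

Lemma forceC (b m : R) H (P q : 'rV[R]_4) nn mu :
  differentiable (Hc H) P -> 0 < calG H P q -> 0 < nn ->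
  force b m H mu P q nn = (1 - b) * q ord0 iu `^ (2 * b) * calG H P q `^ (- b) / nn / 2 *
   (pd (Hc H) mu P * q ord0 iu ^+ 2).
Proof.
move=> dH G0 n0; rewrite /force.
have [_ ->] := @dLx R b m H P q (ebasis mu) nn dH G0.
rewrite (_ : 1 - b - 1 = - b); last by ring.
rewrite /pd. field. by rewrite gt_eqF.
Qed.

Lemma lin_eq (A B X Y : R) : X = Y -> A - B = X - Y -> A = B.
Proof. by move=> -> /eqP; rewrite subrr subr_eq0 => /eqP. Qed.

Lemma DHv (H : R -> R -> R -> R) P : pd (Hc H) iv P = 0.
Proof.
rewrite /pd; have D : is_derive P (ebasis iv) (Hc H) 0.
  apply: dir_deriveP.
  apply: (@is_derive_ext _ _ _ (fun _ : R => Hc H P)).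
  by move=> t; rewrite /Hc !mxE /= !mulr0 !add0r.
by case: D.
Qed.

Lemma lieD4 (Y : 'rV[R]_4 -> 'rV[R]_4) (T : 'rV[R]_4 -> 'M[R]_4) p i j :
  lieD Y T p i j =
    (Y p ord0 iu * pd (fun q => T q i j) iu p + T p iu j * pd (fun q => Y q ord0 iu) i p
      + T p i iu * pd (fun q => Y q ord0 iu) j p)
  + (Y p ord0 iv * pd (fun q => T q i j) iv p + T p iv j * pd (fun q => Y q ord0 iv) i p
      + T p i iv * pd (fun q => Y q ord0 iv) j p)
  + (Y p ord0 i1 * pd (fun q => T q i j) i1 p + T p i1 j * pd (fun q => Y q ord0 i1) i p
      + T p i i1 * pd (fun q => Y q ord0 i1) j p)
  + (Y p ord0 i2 * pd (fun q => T q i j) i2 p + T p i2 j * pd (fun q => Y q ord0 i2) i p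
      + T p i i2 * pd (fun q => Y q ord0 i2) j p).
Proof. by rewrite /lieD big4. Qed.

Lemma lie_contract (H : R -> R -> R -> R) (Y : 'rV[R]_4 -> 'rV[R]_4) (Om : 'rV[R]_4 -> R)
  (c M : R) (P q : 'rV[R]_4) :
  differentiable (Hc H) P ->
  (forall i j, lieD Y (fun z => ppmetric H z - c *: Kmat) P i j
            = 2 * Om P * (ppmetric H P + M *: Kmat) i j) ->
  Y P ord0 iu * pd (Hc H) iu P * q ord0 iu ^+ 2 + Y P ord0 iv * pd (Hc H) iv P * q ord0 iu ^+ 2
  + Y P ord0 i1 * pd (Hc H) i1 P * q ord0 iu ^+ 2 + Y P ord0 i2 * pd (Hc H) i2 P * q ord0 iu ^+ 2
  + 2 * ((\sum_(r < 4) q ord0 r * pd (fun z => Y z ord0 iu) r P) * ((Hc H P - c) * q ord0 iu + q ord0 iv)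
         + (\sum_(r < 4) q ord0 r * pd (fun z => Y z ord0 iv) r P) * q ord0 iu
         + (\sum_(r < 4) q ord0 r * pd (fun z => Y z ord0 i1) r P) * q ord0 i1
         + (\sum_(r < 4) q ord0 r * pd (fun z => Y z ord0 i2) r P) * q ord0 i2)
  = 2 * Om P * (- calG H P q + M * q ord0 iu ^+ 2).
Proof.
move=> dH Lie.
have E : \sum_(i < 4) \sum_(j < 4) q ord0 i * q ord0 j * lieD Y (fun z => ppmetric H z - c *: Kmat) P i j
  = \sum_(i < 4) \sum_(j < 4) q ord0 i * q ord0 j * (2 * Om P * (ppmetric H P + M *: Kmat) i j).
  by apply: eq_bigr => i _; apply: eq_bigr => j _; rewrite Lie.
rewrite !big4 in E.
rewrite !lieD4 in E.
rewrite !pdT // in E.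
rewrite !big4 calGE.
move: E.
repeat match goal with |- context [pd ?f ?k P] => generalize (pd f k P); intro end.
move=> E.
rewrite !mxE /= in E.
rewrite -[H (P ord0 iu) (P ord0 i1) (P ord0 i2)]/(Hc H P) in E.
move: E.
generalize (q ord0 iu) (q ord0 iv) (q ord0 i1) (q ord0 i2) (Y P ord0 iu) (Y P ord0 iv)
  (Y P ord0 i1) (Y P ord0 i2) (Hc H P) (Om P).
intros.
move: E. apply: lie_alg.
Qed.
End Pt.

Theorem mainTheorem7 (R : realType) (H : R -> R -> R -> R) (b m : R)
  (I : set R) (x : R -> 'rV[R]_4) (n : R -> R) :
  0 < b -> b < 1 -> 0 < m ->
  (forall p : 'rV[R]_4,
     differentiable (fun q : 'rV[R]_4 => H (q ord0 iu) (q ord0 i1) (q ord0 i2)) p) ->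
  open I -> is_interval I ->
  EL_solution b m H I x n ->
  (forall l, I l -> 0 < n l) ->
  (forall l, I l -> 0 < derive1 x l ord0 iu) ->
  (forall l, I l -> 0 < calG H (x l) (derive1 x l)) ->
  exists piv : R, 0 < piv /\
    (forall l, I l ->
       pmom b m H iv (x l) (derive1 x l) (n l)
         = (1 - b) * (derive1 x l ord0 iu `^ (1 + 2 * b))
             * (calG H (x l) (derive1 x l) `^ (- b)) / n l
       /\ pmom b m H iv (x l) (derive1 x l) (n l) = piv
       /\ calG H (x l) (derive1 x l) / (derive1 x l ord0 iu) ^+ 2 = Mb2 b m piv) /\
    (forall (Y : 'rV[R]_4 -> 'rV[R]_4) (Om : 'rV[R]_4 -> R),
       (forall p, differentiable Y p) ->
       (forall p i j,
          lieD Y (fun q => ppmetric H q - (b / (1 - b) * Mb2 b m piv) *: Kmat) p i j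
            = 2 * Om p * (ppmetric H p + Mb2 b m piv *: Kmat) i j) ->
       forall s t, I s -> I t ->
         \sum_(mu < 4) Y (x s) ord0 mu * pmom b m H mu (x s) (derive1 x s) (n s)
         = \sum_(mu < 4) Y (x t) ord0 mu * pmom b m H mu (x t) (derive1 x t) (n t)).
Proof.
move=> b0 b1 m0 dH oI iI [dx [EL En]] npos qpos Gpos.
have dHc : forall p, differentiable (Hc H) p := dH.
have b1' : 0 < 1 - b by rewrite subr_gt0.
have pvE : forall l, I l -> pmom b m H iv (x l) (derive1 x l) (n l)
   = (1 - b) * (derive1 x l ord0 iu `^ (1 + 2 * b))
       * (calG H (x l) (derive1 x l) `^ (- b)) / n l.
  move=> l Il; rewrite pmomC ?qpos ?Gpos ?npos //= powE3 ?qpos //.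
  ring.
have pvC : forall s t, I s -> I t -> pmom b m H iv (x s) (derive1 x s) (n s)
    = pmom b m H iv (x t) (derive1 x t) (n t).
  apply: (@cst_on_itv R (fun s => pmom b m H iv (x s) (derive1 x s) (n s)) I iI).
  move=> l Il; have := EL l Il iv.
  by rewrite forceC ?Gpos ?npos // DHv mul0r mulr0.
suff main : forall piv, 0 < piv ->
   (forall l, I l -> pmom b m H iv (x l) (derive1 x l) (n l) = piv) ->
   (forall l, I l ->
       pmom b m H iv (x l) (derive1 x l) (n l)
         = (1 - b) * (derive1 x l ord0 iu `^ (1 + 2 * b))
             * (calG H (x l) (derive1 x l) `^ (- b)) / n l
       /\ pmom b m H iv (x l) (derive1 x l) (n l) = piv
       /\ calG H (x l) (derive1 x l) / (derive1 x l ord0 iu) ^+ 2 = Mb2 b m piv) /\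
    (forall (Y : 'rV[R]_4 -> 'rV[R]_4) (Om : 'rV[R]_4 -> R),
       (forall p, differentiable Y p) ->
       (forall p i j,
          lieD Y (fun q => ppmetric H q - (b / (1 - b) * Mb2 b m piv) *: Kmat) p i j
            = 2 * Om p * (ppmetric H p + Mb2 b m piv *: Kmat) i j) ->
       forall s t, I s -> I t ->
         \sum_(mu < 4) Y (x s) ord0 mu * pmom b m H mu (x s) (derive1 x s) (n s)
         = \sum_(mu < 4) Y (x t) ord0 mu * pmom b m H mu (x t) (derive1 x t) (n t)).
  case: (pselect (exists l, I l)) => [[l0 Il0]|nI].
    exists (pmom b m H iv (x l0) (derive1 x l0) (n l0)).
    have pp : 0 < pmom b m H iv (x l0) (derive1 x l0) (n l0).
      rewrite pvE //; apply: divr_gt0; last exact: npos.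
      by rewrite !mulr_gt0 // powR_gt0 ?qpos ?Gpos.
    split => //; apply: main => // l Il; exact: pvC.
  exists 1; split => //; apply: main => // l Il.
  by exfalso; apply: nI; exists l.
move=> piv pp pvP.
have MbE : forall l, I l -> Mb2 b m piv = calG H (x l) (derive1 x l) / (derive1 x l ord0 iu) ^+ 2.
  move=> l Il.
  apply: (@Mb2_eq R b m _ _ (n l) piv b0 b1 m0 (qpos l Il) (Gpos l Il) (npos l Il)); last first.
    by rewrite -(pvP l Il) pvE.
  have := En l Il; rewrite dLn ?gt_eqF ?npos // => E0.
  apply/eqP; rewrite -subr_eq0; apply/eqP.
  set A := _ `^ (2 * b) * _ `^ (1 - b).
  have nn0 : n l != 0 by rewrite gt_eqF ?npos.
  have -> : m ^+ 2 * n l ^+ 2 - A = - (2 * n l ^+ 2) * (A / (2 * n l ^+ 2) - m ^+ 2 / 2).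
    by field; rewrite nn0.
  by rewrite E0 mulr0.
split.
  move=> l Il; split; first exact: pvE.
  by split; [exact: pvP | rewrite (MbE l Il)].
move=> Y Om dY Lie s t Is It.
apply: (@cst_on_itv R (fun s => \sum_(mu < 4) Y (x s) ord0 mu * pmom b m H mu (x s) (derive1 x s) (n s)) I iI _ s t Is It).
move=> l Il.
have q0 := qpos l Il; have G0 := Gpos l Il; have n0 := npos l Il.
have dYk : forall k, @isd R (fun s => Y (x s) ord0 k) l
   (\sum_(r < 4) derive1 x l ord0 r * pd (fun z => Y z ord0 k) r (x l)).
  by move=> k; exact: (@dYx R Y x k l (dY (x l)) (dx l Il)).
have dpk : forall k, @isd R (fun s => pmom b m H k (x s) (derive1 x s) (n s)) l
   (force b m H k (x l) (derive1 x l) (n l)) := EL l Il.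
have D := @iadd R _ _ _ _ _ (@iadd R _ _ _ _ _ (@iadd R _ _ _ _ _
   (@imul R _ _ _ _ _ (dYk iu) (dpk iu)) (@imul R _ _ _ _ _ (dYk iv) (dpk iv)))
   (@imul R _ _ _ _ _ (dYk i1) (dpk i1))) (@imul R _ _ _ _ _ (dYk i2) (dpk i2)).
eapply (@is_derive_ext R); last first.
  eapply is_derive_eq; first exact: D.
  shelve.
  by move=> u /=; rewrite big4.
Unshelve.
rewrite /=.
set qu := derive1 x l ord0 iu.
set G := calG H (x l) (derive1 x l).
set K := (1 - b) * qu `^ (2 * b) * G `^ (- b) / n l.
set c := b / (1 - b) * (G / qu ^+ 2).
have LC := @lie_contract R H Y Om _ _ (x l) (derive1 x l) (dHc (x l)) (Lie (x l)).
rewrite (MbE l Il) -/qu -/G -/c in LC.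
have Z0 : 2 * Om (x l) * (- G + G / qu ^+ 2 * qu ^+ 2) = 0.
  by rewrite divfK ?addNr ?mulr0 // expf_neq0 // gt_eqF.
have fk : forall k, force b m H k (x l) (derive1 x l) (n l) = K / 2 * (pd (Hc H) k (x l) * qu ^+ 2).
  by move=> k; rewrite forceC.
have pu : pmom b m H iu (x l) (derive1 x l) (n l) = K * ((Hc H (x l) - c) * qu + derive1 x l ord0 iv).
  by rewrite pmomC //=; rewrite -/qu -/G -/c -/K; ring.
have pv : pmom b m H iv (x l) (derive1 x l) (n l) = K * qu.
  by rewrite pmomC //=; rewrite -/qu -/G -/c -/K; ring.
have p1 : pmom b m H i1 (x l) (derive1 x l) (n l) = K * derive1 x l ord0 i1.
  by rewrite pmomC //=; rewrite -/qu -/G -/c -/K; ring.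
have p2 : pmom b m H i2 (x l) (derive1 x l) (n l) = K * derive1 x l ord0 i2.
  by rewrite pmomC //=; rewrite -/qu -/G -/c -/K; ring.
eapply (@fin_alg R); [exact: LC | exact: Z0 | exact: (fk iu) | exact: (fk iv) | exact: (fk i1)
  | exact: (fk i2) | exact: pu | exact: pv | exact: p1 | exact: p2].
Qed.
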